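(* Let $f:\mathbb{R}^m\to\mathbb{R}\cup\{+\infty\}$ be a proper lower semicontinuous convex function and let $\bar x\in S_f$ be such that $\min_{\|h\|=1}f'(\bar x,h)\neq 0$. Then the inequality $f(x)\le 0$ has a local error bound at $\bar x$, and moreover $$\tau_{\min}(f,\bar x)\le \frac{1}{\left|\min_{\|h\|=1}f'(\bar x,h)\right|}.$$
   Context: $\mathbb{R}^m$ carries the Euclidean norm, $B(\bar x,\delta)$ is the closed ball of radius $\delta$ around $\bar x$, and $d(x,D)=\inf\{\|x-y\|:y\in D\}$ (with $\inf\emptyset=+\infty$). $f'(\bar x,h):=\lim_{t\to0^+}\frac{f(\bar x+th)-f(\bar x)}{t}$ is the directional derivative. $S_f:=\{x\in\mathbb{R}^m: f(x)\le 0\}$. The inequality $f(x)\le0$ has a local error bound at $\bar x$ if there exist $\tau,\delta\in(0,+\infty)$ with $d(x,S_f)\le\tau[f(x)]_+$ for all $x\in B(\bar x,\delta)$, where $[t]_+=\max\{t,0\}$. The local error bound modulus is $\tau_{\min}(f,\bar x):=\inf\{\tau>0:\text{there exists }\delta>0\text{ such that }d(x,S_f)\le\tau[f(x)]_+\ \forall x\in B(\bar x,\delta)\}$. *)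

(* Defs.v *)
From HB Require Import structures.
From mathcomp Require Import all_boot all_order all_algebra.
From mathcomp Require Import all_classical all_reals all_analysis.
Set Implicit Arguments. Unset Strict Implicit. Unset Printing Implicit Defensive.
Import Order.TTheory GRing.Theory Num.Theory.
Import numFieldNormedType.Exports.
Local Open Scope classical_set_scope.
Local Open Scope ring_scope.

Section Defs.
Variables (R : realType) (m : nat).
Implicit Types (x y h : 'rV[R]_m) (f : 'rV[R]_m -> \bar R).

Definition enorm x : R := Num.sqrt (\sum_(i < m) x ord0 i ^+ 2).

Definition cball xbar (delta : R) : set 'rV[R]_m :=
  [set x | enorm (x - xbar) <= delta].

(* d(x, D) = inf { ||x - y|| : y in D }, with inf emptyset = +oo *)
Definition edist x (D : set 'rV[R]_m) : \bar R :=
  ereal_inf [set (enorm (x - y))%:E | y in D].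

Definition Sf f : set 'rV[R]_m := [set x | (f x <= 0)%E].

Definition proper_fun f := (forall x, f x != -oo%E) /\ (exists x, f x != +oo%E).

Definition convex_fun f := forall x y (t : R), 0 <= t <= 1 ->
  (f ((1 - t) *: x + t *: y)%R <= (1 - t)%:E * f x + t%:E * f y)%E.

Definition lsc_fun f := forall x (a : R), (a%:E < f x)%E ->
  exists2 delta : R, 0 < delta &
    forall y, enorm (y - x) < delta -> (a%:E < f y)%E.

Definition dir_deriv f xbar h : \bar R :=
  lim ((fun t : R => ((f (xbar + t *: h)%R - f xbar) * (t^-1)%:E)%E) @ 0^'+).

Definition error_bound_with f xbar (tau delta : R) :=
  forall x, cball xbar delta x ->
    (edist x (Sf f) <= tau%:E * maxe (f x) 0)%E.

Definition has_local_error_bound f xbar :=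
  exists tau delta : R, 0 < tau /\ 0 < delta /\ error_bound_with f xbar tau delta.

(* tau_min(f, xbar), as an extended real (inf emptyset = +oo) *)
Definition tau_min f xbar : \bar R :=
  ereal_inf [set tau%:E | tau in
    [set tau : R | 0 < tau /\ exists2 delta : R, 0 < delta &
                                 error_bound_with f xbar tau delta]].

End Defs.

(* 1 / |v| for v in \bar R, with the convention 1/(+oo) = 0 *)
Definition inv_abs_e {R : realType} (v : \bar R) : \bar R :=
  match v with
  | r%:E => (`|r|^-1)%:E
  | _ => 0%E
  end.

(* Main.v *)
Require Import Defs.
From HB Require Import structures.
From mathcomp Require Import all_boot all_order all_algebra.
From mathcomp Require Import all_classical all_reals all_analysis.
From mathcomp Require Import ring lra.
Import Order.TTheory GRing.Theory Num.Theory.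
Local Open Scope classical_set_scope.
Local Open Scope ring_scope.
Section Aux.
Variables (R : realType) (m : nat).
Implicit Types (x y z h : 'rV[R]_m).

Definition sq x : R := \sum_(i < m) x ord0 i ^+ 2.
Lemma sq_ge0 x : 0 <= sq x.
Proof. by apply: sumr_ge0 => i _; exact: sqr_ge0. Qed.
Lemma enormE x : enorm x = Num.sqrt (sq x). Proof. by []. Qed.
Lemma enorm_ge0 x : 0 <= enorm x. Proof. exact: sqrtr_ge0. Qed.
Lemma enorm_sq x : enorm x ^+ 2 = sq x.
Proof. by rewrite enormE sqr_sqrtr // sq_ge0. Qed.
Lemma enorm0 : enorm (0 : 'rV[R]_m) = 0.
Proof.
rewrite enormE /sq big1 ?sqrtr0 // => i _; by rewrite mxE expr0n.
Qed.
Lemma sqZ (a : R) x : sq (a *: x) = a ^+ 2 * sq x.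
Proof. rewrite /sq mulr_sumr; apply: eq_bigr => i _; by rewrite mxE exprMn. Qed.
Lemma enormZ (a : R) x : enorm (a *: x) = `|a| * enorm x.
Proof. by rewrite !enormE sqZ sqrtrM ?sqr_ge0 // sqrtr_sqr. Qed.
Lemma sq_add_le (e : R) x y : 0 < e ->
  sq (x + y) <= (1 + e^-1) * sq x + (1 + e) * sq y.
Proof.
move=> e0; rewrite /sq !mulr_sumr -big_split /=; apply: ler_sum => i _.
rewrite mxE; set a := x ord0 i; set b := y ord0 i.
have: 0 <= e^-1 * (a - e * b) ^+ 2 by apply: mulr_ge0; [rewrite invr_ge0 ltW | exact: sqr_ge0].
have -> : e^-1 * (a - e * b) ^+ 2 = (1 + e^-1) * a ^+ 2 + (1 + e) * b ^+ 2 - (a + b) ^+ 2.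
  by field; rewrite gt_eqF.
by rewrite subr_ge0.
Qed.
Lemma enorm_le_sq x (r : R) : 0 <= r -> sq x <= r ^+ 2 -> enorm x <= r.
Proof.
move=> r0 h; rewrite enormE -(ger0_norm r0) -sqrtr_sqr.
by rewrite ler_sqrt // sqr_ge0.
Qed.

Lemma edist_le (f : 'rV[R]_m -> \bar R) x y : Sf f y ->
  (Defs.edist x (Sf f) <= (enorm (x - y))%:E)%E.
Proof. by move=> Sy; apply: ereal_inf_lbound; exists y. Qed.

Lemma seg (f : 'rV[R]_m -> \bar R) x z (a c : R) : convex_fun f ->
  f x = a%:E -> f z = c%:E -> 0 < a -> c < 0 ->
  (Defs.edist x (Sf f) <= (enorm (x - z) / (- c) * a)%:E)%E.
Proof.
move=> cvx fx fz a0 c0.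
have ac0 : 0 < a - c by lra.
set s := a / (a - c).
have s0 : 0 <= s by rewrite /s divr_ge0 ?ltW.
have s01 : 0 <= s <= 1.
  by rewrite s0 /= /s ler_pdivrMr // mul1r; lra.
set y := (1 - s) *: x + s *: z.
have Sy : Sf f y.
  rewrite /Sf /=; apply: le_trans (cvx x z s s01) _.
  rewrite fx fz -!EFinM -EFinD lee_fin.
  have -> : (1 - s) * a + s * c = 0 by rewrite /s; field; rewrite gt_eqF.
  by [].
apply: le_trans (@edist_le f x y Sy) _; rewrite lee_fin.
have -> : x - y = s *: (x - z).
  by rewrite /y scalerBl scale1r scalerBr opprD opprB addrA [x + _]addrCA subrr addr0.
rewrite enormZ ger0_norm // mulrC -mulrA ler_wpM2l ?enorm_ge0 //.
rewrite /s mulrC ler_pM2r // lef_pV2 ?posrE; lra.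
Qed.

Definition qf (f : 'rV[R]_m -> \bar R) xbar h (t : R) : \bar R :=
  ((f (xbar + t *: h)%R - f xbar) * (t^-1)%:E)%E.

Lemma qf_mono f xbar h c : convex_fun f -> proper_fun f -> f xbar = c%:E ->
  {in `]0, +oo[ &, nondecreasing_fun (qf f xbar h)}.
Proof.
move=> cvx [fNy _] fc s t; rewrite !in_itv /= !andbT => s0 t0 st.
rewrite /qf fc.
case E : (f (xbar + t *: h)) => [b| |]; last by have := fNy (xbar + t *: h); rewrite E.
  2: by rewrite /= mulyr gtr0_sg ?invr_gt0 // mul1e leey.
have l01 : 0 <= s / t <= 1.
  apply/andP; split; first exact: divr_ge0 (ltW s0) (ltW t0).
  by rewrite ler_pdivrMr // mul1r.
have := cvx xbar (xbar + t *: h) (s / t) l01.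
have -> : (1 - s / t) *: xbar + (s / t) *: (xbar + t *: h) = xbar + s *: h.
  rewrite scalerBl scale1r scalerDr scalerA -mulrA mulVf ?gt_eqF // mulr1.
  by rewrite addrA subrK.
rewrite fc E -!EFinM -EFinD.
case E2 : (f (xbar + s *: h)) => [d| |]; last by have := fNy (xbar + s *: h); rewrite E2.
  2: by rewrite leye_eq.
rewrite lee_fin => hd.
rewrite -!EFinB -!EFinM lee_fin ler_pdivrMr // .
have -> : (b - c) / t * s = (b - c) * (s / t) by rewrite mulrA mulrAC.
have : d - c <= (b - c) * (s / t) by rewrite mulrBl; lra.
by [].
Qed.

Lemma dd_inf f xbar h c : convex_fun f -> proper_fun f -> f xbar = c%:E ->
  dir_deriv f xbar h = ereal_inf (qf f xbar h @` `]0, +oo[).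
Proof.
move=> cvx pf fc.
have := @nondecreasing_at_right_cvge R (qf f xbar h) 0 (BInfty _ false) isT
  (@qf_mono f xbar h c cvx pf fc).
by move/cvg_lim => <-.
Qed.

Lemma dd_le f xbar h c t : convex_fun f -> proper_fun f -> f xbar = c%:E ->
  0 < t -> (dir_deriv f xbar h <= qf f xbar h t)%E.
Proof.
move=> cvx pf fc t0; rewrite (@dd_inf f xbar h c cvx pf fc).
apply: ereal_inf_lbound; exists t => //=; by rewrite in_itv /= andbT.
Qed.

Lemma dd_lt f xbar h c w : convex_fun f -> proper_fun f -> f xbar = c%:E ->
  (dir_deriv f xbar h < w)%E -> exists2 t, 0 < t & (qf f xbar h t < w)%E.
Proof.
move=> cvx pf fc; rewrite (@dd_inf f xbar h c cvx pf fc) => /ereal_inf_lt [_ [t + <-] qw].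
by move=> /=; rewrite in_itv /= andbT => t0; exists t.
Qed.

Lemma eb_wrap f xbar (tau delta : R) : proper_fun f -> 0 < tau ->
  (forall x (a : R), cball xbar delta x -> f x = a%:E -> 0 < a ->
     (Defs.edist x (Sf f) <= (tau * a)%:E)%E) ->
  error_bound_with f xbar tau delta.
Proof.
move=> [fNy _] t0 H x bx.
case E : (f x) => [a| |]; last by have := fNy x; rewrite E.
- case: (leP a 0) => a0.
    have Sx : Sf f x by rewrite /Sf /= E lee_fin.
    apply: le_trans (@edist_le f x x Sx) _.
    rewrite subrr enorm0; apply: mule_ge0; first by rewrite lee_fin ltW.
    by rewrite le_max lexx orbT.
  rewrite (max_idPl _); last by rewrite lee_fin ltW.
  by rewrite -EFinM; apply: H.
- rewrite (max_idPl _); last exact: leey.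
  by rewrite mulry gtr0_sg // mul1e leey.
Qed.

Lemma enorm_one h : enorm h = 1 -> sq h = 1.
Proof. by move=> h1; rewrite -enorm_sq h1 expr1n. Qed.

Lemma pos_case f xbar (tau : R) : convex_fun f -> proper_fun f -> f xbar = 0%E ->
  0 < tau ->
  (forall h, enorm h = 1 -> ((tau^-1)%:E <= dir_deriv f xbar h)%E) ->
  error_bound_with f xbar tau 1.
Proof.
move=> cvx pf f0 t0 Hd.
have Sxbar : Sf f xbar by rewrite /Sf /= f0.
apply: eb_wrap => // x a bx fx a0.
apply: le_trans (@edist_le f x xbar Sxbar) _; rewrite lee_fin.
set t := enorm (x - xbar).
have t0' : 0 <= t by exact: enorm_ge0.
case: (eqVneq t 0) => [->|tn0]; first by rewrite mulr_ge0 ?ltW.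
have tp : 0 < t by rewrite lt_neqAle eq_sym tn0.
set h := t^-1 *: (x - xbar).
have h1 : enorm h = 1 by rewrite enormZ ger0_norm ?invr_ge0 // mulVf.
have := le_trans (Hd h h1) (@dd_le f xbar h 0 t cvx pf f0 tp).
rewrite /qf.
have -> : xbar + t *: h = x.
  by rewrite /h scalerA mulfV // scale1r addrC subrK.
rewrite fx f0 sube0 -EFinM lee_fin ler_pdivlMr // => H.
have -> : t = tau * (tau^-1 * t) by rewrite mulrA mulfV ?gt_eqF // mul1r.
by rewrite ler_wpM2l // ltW.
Qed.

Lemma neg_case f xbar h0 (tau eta t : R) : convex_fun f -> proper_fun f ->
  f xbar = 0%E -> enorm h0 = 1 -> 0 < tau -> 0 < eta -> 0 < t ->
  (qf f xbar h0 t < (- ((1 + eta) / tau))%:E)%E ->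
  error_bound_with f xbar tau (eta * t).
Proof.
move=> cvx pf f0 h1 t0 e0 tp.
have [fNy _] := pf.
set w := - ((1 + eta) / tau).
have e1 : 0 < 1 + eta by lra.
have w0 : w < 0 by rewrite /w oppr_lt0 divr_gt0.
rewrite /qf f0 sube0.
set z := xbar + t *: h0.
case E : (f z) => [b| |]; last by have := fNy z; rewrite E.
  2: by rewrite mulyr gtr0_sg ?invr_gt0 // mul1e ltNge leey.
rewrite -EFinM lte_fin ltr_pdivrMr // => bw.
have b0 : b < 0 by nra.
apply: eb_wrap => // x a bx fx a0.
apply: le_trans (@seg f x z a b cvx fx E a0 b0) _.
rewrite lee_fin ler_pM2r //.
have nx : enorm (x - z) <= (1 + eta) * t.
  apply: enorm_le_sq; first by rewrite mulr_ge0 ?ltW.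
  have -> : x - z = (x - xbar) + (- t) *: h0 by rewrite /z opprD addrA scaleNr.
  apply: le_trans (@sq_add_le eta _ _ e0) _.
  rewrite sqZ (@enorm_one h0 h1) mulr1.
  have sx : sq (x - xbar) <= (eta * t) ^+ 2.
    rewrite -enorm_sq; have := enorm_ge0 (x - xbar); move: bx; rewrite /cball /=.
    move=> bx ge; nra.
  have E' : (1 + eta^-1) * (eta * t) ^+ 2 + (1 + eta) * (- t) ^+ 2 = ((1 + eta) * t) ^+ 2.
    by field; rewrite gt_eqF.
  rewrite -E' lerD2r ler_wpM2l //.
  by rewrite addr_ge0 ?invr_ge0 ?ltW.
rewrite ler_pdivrMr; last by lra.
have E2 : tau * (- (w * t)) = (1 + eta) * t by rewrite /w; field; rewrite gt_eqF.
apply: le_trans nx _; rewrite -E2 ler_wpM2l ?ltW //; lra.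
Qed.
End Aux.

Lemma inv_abs_ge0 (R : realType) (v : \bar R) :
  exists r : R, inv_abs_e v = r%:E /\ 0 <= r.
Proof.
case: v => [r| |] /=; last 2 first.
- by exists 0.
- by exists 0.
by exists (`|r|^-1); split => //; rewrite invr_ge0.
Qed.

Theorem proposition3 (R : realType) (m : nat) (f : 'rV[R]_m -> \bar R)
    (xbar : 'rV[R]_m) (h0 : 'rV[R]_m) :
  proper_fun f -> lsc_fun f -> convex_fun f ->
  Sf f xbar ->
  (* min_{||h|| = 1} f'(xbar, h) is attained at h0 ... *)
  enorm h0 = 1 ->
  (forall h, enorm h = 1 -> (dir_deriv f xbar h0 <= dir_deriv f xbar h)%E) ->
  (* ... and is nonzero *)
  dir_deriv f xbar h0 != 0%E ->
  has_local_error_bound f xbar /\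
  (tau_min f xbar <= inv_abs_e (dir_deriv f xbar h0))%E.
Proof.
move=> pf lsc cvx Sx h01 hmin vn0.
have [fNy _] := pf.
move Ev : (dir_deriv f xbar h0) => v in hmin vn0 *.
have Main : forall e : R, 0 < e -> exists tau delta : R,
    [/\ 0 < tau, 0 < delta, error_bound_with f xbar tau delta &
        (tau%:E <= inv_abs_e v + e%:E)%E].
  move=> e e0.
  case Ec : (f xbar) => [c| |]; last by have := fNy xbar; rewrite Ec.
    2: by move: Sx; rewrite /Sf /= Ec leye_eq.
  have c0 : c <= 0 by move: Sx; rewrite /Sf /= Ec lee_fin.
  have [r [Er r0]] := @inv_abs_ge0 _ v.
  case: (ltP c 0) => cneg.
    exists e, (e * - c); split => //; first by nra.
      apply: eb_wrap => // x a bx fx a0.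
      apply: le_trans (@seg _ _ f x xbar a c cvx fx Ec a0 cneg) _.
      rewrite lee_fin ler_pM2r // ler_pdivrMr; last by lra.
      exact: bx.
    by rewrite Er -EFinD lee_fin; lra.
  have c00 : c = 0 by lra.
  have f0 : f xbar = 0%E by rewrite Ec c00.
  case: v Ev hmin vn0 Er => [r'| |] Ev hmin vn0 Er.
  - case: (ltgtP r' 0) => [rn|rp|rz]; last by move: vn0; rewrite rz eqxx.
    + set k := - r'.
      have k0 : 0 < k by rewrite /k oppr_gt0.
      set tau := k^-1 + e.
      have tau0 : 0 < tau by rewrite /tau addr_gt0 ?invr_gt0.
      set eta := e * k / 2.
      have eta0 : 0 < eta by rewrite /eta divr_gt0 ?mulr_gt0.
      have vw : (dir_deriv f xbar h0 < (- ((1 + eta) / tau))%:E)%E.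
        rewrite Ev lte_fin ltrNr -/k ltr_pdivrMr //.
        have -> : k * tau = 1 + e * k by rewrite /tau mulrDr mulfV ?gt_eqF // mulrC.
        rewrite /eta; have := mulr_gt0 e0 k0; lra.
      have [t tp qt] := @dd_lt _ _ f xbar h0 0 _ cvx pf f0 vw.
      exists tau, (eta * t); split => //; first by rewrite mulr_gt0.
        exact: (@neg_case _ _ f xbar h0 tau eta t cvx pf f0 h01 tau0 eta0 tp qt).
      rewrite /= -EFinD lee_fin /tau /k.
      by rewrite ltr0_norm.
    + exists (r'^-1), 1; split => //; first by rewrite invr_gt0.
        apply: (@pos_case _ _ f xbar (r'^-1) cvx pf f0); first by rewrite invr_gt0.
        by move=> h h1; rewrite invrK; apply: hmin.
      rewrite /= -EFinD lee_fin gtr0_norm //; lra.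
  - exists e, 1; split => //.
      apply: (@pos_case _ _ f xbar e cvx pf f0 e0) => h h1.
      by apply: le_trans (hmin h h1); exact: leey.
    by rewrite /= add0e.
  - have vw : (dir_deriv f xbar h0 < (- ((1 + 1) / e))%:E)%E by rewrite Ev ltNyr.
    have [t tp qt] := @dd_lt _ _ f xbar h0 0 _ cvx pf f0 vw.
    exists e, (1 * t); split => //; first by rewrite mul1r.
      exact: (@neg_case _ _ f xbar h0 e 1 t cvx pf f0 h01 e0 ltr01 tp qt).
    by rewrite /= add0e.
split.
  have [tau [delta [t0 d0 eb _]]] := Main 1 ltr01.
  by exists tau, delta.
apply/lee_addgt0Pr => e e0.
have [tau [delta [t0 d0 eb le]]] := Main e e0.
apply: le_trans le; apply: ereal_inf_lbound; exists tau => //.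
by split => //; exists delta.
Qed.
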